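(* Let $w$ be a string of length $n$ and $i$ a position of $w$ with $i-\mu(i)\ge1$, $i+\mu(i)-1\le n$ and $\mu(i)>1$. Suppose $j$ is an integer with $i<j<i+\mu(i)$ such that $\mu(j')<\mu(i)$ for each $j'$ with $i<j'\le j$. Then $w[j-\mu(j)..j+\mu(j)-1]$ is a substring of $w[i-\mu(i)..i+\mu(i)-1]$, in the sense that $i-\mu(i)\le j-\mu(j)$ and $j+\mu(j)\le i+\mu(i)$.
   Context: $w[a..b]=w[a]\cdots w[b]$. For a position $i\in\{1,\dots,n\}$ of $w$, the local period $\mu(i)$ is the least positive integer $\mu$ such that $w[j]=w[j+\mu]$ for all $j$ with $\max\{1,i-\mu\}\le j$ and $j+\mu\le\min\{n,i+\mu-1\}$. *)

(* Defs.v *)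
From mathcomp Require Import all_boot.
Set Implicit Arguments. Unset Strict Implicit. Unset Printing Implicit Defensive.

(* Strings are sequences w : seq T over an eqType T, positions are 1-based:
   the letter at position k (1 <= k <= size w) is  nth x0 w k.-1 ; we use
   [onth] so that no default letter is needed (only in-range positions
   are ever compared). *)
Definition letter (T : eqType) (w : seq T) (k : nat) : option T := onth w k.-1.

Definition local_rep (T : eqType) (w : seq T) (i m : nat) : bool :=
  [forall j : 'I_(size w).+1,
     ((maxn 1 (i - m) <= j) && (j + m <= minn (size w) (i + m - 1)))
       ==> (letter w j == letter w (j + m))].

Definition local_period_pred (T : eqType) (w : seq T) (i : nat) : pred nat :=
  fun m => (0 < m) && local_rep w i m.

Lemma local_period_exists (T : eqType) (w : seq T) (i : nat) :
  exists m, local_period_pred w i m.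
Proof.
exists (size w).+1; rewrite /local_period_pred /=.
apply/forallP => j; apply/implyP => /andP [H1 H2].
exfalso; move: H1 H2; rewrite geq_max => /andP [Hj _] Hm.
have := leq_trans Hm (geq_minl _ _); rewrite addnS ltnNge leq_addl.
by [].
Qed.

Definition mu (T : eqType) (w : seq T) (i : nat) : nat :=
  ex_minn (local_period_exists w i).

(* Main.v *)
Require Import Defs.
From mathcomp Require Import all_boot zify.
Set Implicit Arguments. Unset Strict Implicit. Unset Printing Implicit Defensive.

Fixpoint lexle (f : bool) (a b : seq nat) : bool :=
  match a, b with
  | [::], _ => true
  | _ :: _, [::] => false
  | x :: a', y :: b' => if x == y then lexle f a' b' else (if f then x < y else y < x)
  end.

Lemma lexle_refl f a : lexle f a a.
Proof. by elim: a => //= x a IH; rewrite eqxx. Qed.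

Lemma lexle_total f a b : lexle f a b || lexle f b a.
Proof.
elim: a b => [|x a IH] [|y b] //=.
case: (eqVneq x y) => [_|ne]; first exact: IH.
by case: f in IH *; lia.
Qed.

Lemma lexle_anti f a b : lexle f a b -> lexle f b a -> a = b.
Proof.
elim: a b => [|x a IH] [|y b] //=.
case: (eqVneq x y) => [->|ne]; first by move=> h1 h2; rewrite (IH _ h1 h2).
by case: f in IH * => h1 h2; lia.
Qed.

Lemma lexle_trans f a b c : lexle f a b -> lexle f b c -> lexle f a c.
Proof.
elim: a b c => [|x a IH] [|y b] [|z c] //=.
case: (eqVneq x y) => [exy|nxy]; case: (eqVneq y z) => [eyz|nyz];
  case: (eqVneq x z) => [exz|nxz] //; try (subst; exact: IH);
  try (subst; by rewrite eqxx in nxz); by case: f in IH * => /=; lia.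
Qed.

Lemma lexle_cat f L a b : lexle f (L ++ a) (L ++ b) = lexle f a b.
Proof. by elim: L => //= x L IH; rewrite eqxx. Qed.

Lemma lexle_prefix f a b : lexle f a (a ++ b).
Proof. by elim: a => //= x a IH; rewrite eqxx. Qed.

Lemma lexle_both f a b : lexle f a b -> lexle (~~ f) a b -> exists b', b = a ++ b'.
Proof.
elim: a b => [|x a IH] b; first by move=> _ _; exists b.
case: b => [|y b] //=.
case: (eqVneq x y) => [->|ne]; first by move=> h1 h2; case: (IH _ h1 h2) => b' ->; exists b'.
by case: f in IH * => /= h1 h2; lia.
Qed.

Lemma lexle_take f k a b : k <= size a -> k <= size b -> take k a = take k b ->
  lexle f a b = lexle f (drop k a) (drop k b).
Proof.
move=> ha hb e.
by rewrite -{1}(cat_take_drop k a) -{1}(cat_take_drop k b) e lexle_cat.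
Qed.

Lemma exists_max f (Z : seq nat) n : 0 < n ->
  exists c, c < n /\ forall k, k < n -> lexle f (drop k Z) (drop c Z).
Proof.
elim: n => [//|n IH] _.
case: n IH => [|n] IH.
  by exists 0; split => // k; rewrite ltnS leqn0 => /eqP ->; apply: lexle_refl.
case: (IH erefl) => c [hc hk].
case/orP: (lexle_total f (drop n.+1 Z) (drop c Z)) => h.
- exists c; split; first lia.
  move=> k; rewrite ltnS leq_eqVlt => /orP [/eqP ->|]; first exact: h.
  exact: hk.
- exists n.+1; split => // k; rewrite ltnS leq_eqVlt => /orP [/eqP ->|hk'].
    exact: lexle_refl.
  exact: lexle_trans (hk _ hk') h.
Qed.

Definition period (Z : seq nat) q :=
  forall r, r + q < size Z -> nth 0 Z r = nth 0 Z (r + q).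
Definition lrep (Z : seq nat) c q :=
  forall r, c - q <= r -> r < c -> r + q < size Z -> nth 0 Z r = nth 0 Z (r + q).

Lemma crit_pos f (Z : seq nat) c c' :
  c < size Z -> (forall k, k < size Z -> lexle f (drop k Z) (drop c Z)) ->
  (forall k, k < size Z -> lexle (~~ f) (drop k Z) (drop c' Z)) ->
  c' <= c -> forall q, 0 < q -> lrep Z c q -> period Z q.
Proof.
move=> hc hmax hmax' hcc q q0 hl.
have [qc|cq] := leqP q c.
- exfalso.
  have hA := hmax (c - q) ltac:(lia).
  have [sb|sb] := leqP (size Z - c) q.
  + have e : take (size Z - c) (drop (c - q) Z) = drop c Z.
      apply: (@eq_from_nth _ 0).
        rewrite size_take !size_drop; case: ltnP => ?; lia.
      move=> r; rewrite size_take size_drop.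
      have -> : (size Z - c < size Z - (c - q)) = true by lia.
      move=> hr; rewrite nth_take //.
      rewrite !nth_drop.
      rewrite hl; first (congr nth; lia); lia.
    move: hA; rewrite -(cat_take_drop (size Z - c) (drop (c - q) Z)) e.
    rewrite -{2}(cats0 (drop c Z)) lexle_cat.
    case: (drop (size Z - c) _) (size_drop (size Z - c) (drop (c - q) Z)) => [|? ?] //=.
    move=> h _; move: h; rewrite size_drop; lia.
  + have e : take q (drop (c - q) Z) = take q (drop c Z).
      apply: (@eq_from_nth _ 0).
        rewrite !size_take !size_drop; do 2 case: ltnP => ?; lia.
      move=> r; rewrite size_take size_drop.
      have -> : (q < size Z - (c - q)) = true by lia.
      move=> hr'.
      rewrite !nth_take // !nth_drop.
      rewrite hl; first (congr nth; lia); lia.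
    move: hA; rewrite (lexle_take _ _ _ e); try (rewrite size_drop; lia).
    rewrite !drop_drop.
    have -> : q + (c - q) = c by lia.
    move=> h1; have h2 := hmax (q + c) ltac:(lia).
    have := lexle_anti h1 h2 => /(congr1 size); rewrite !size_drop; lia.
- have [cs|cs] := leqP (size Z) (c + q).
  + move=> r hr; apply: hl; lia.
  + have e : take (c - c') (drop (c' + q) Z) = take (c - c') (drop c' Z).
      apply: (@eq_from_nth _ 0).
        rewrite !size_take !size_drop; do 2 case: ltnP => ?; lia.
      move=> r; rewrite size_take size_drop.
      have -> : (c - c' < size Z - (c' + q)) = true by lia.
      move=> hr'.
      rewrite !nth_take // !nth_drop.
      rewrite [in RHS]hl; first (congr nth; lia); lia.
    have h1 := hmax' (c' + q) ltac:(lia).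
    rewrite (lexle_take _ _ _ e) ?size_drop ?drop_drop in h1; try lia.
    have e1 : (c - c' + (c' + q)) = c + q by lia.
    have e2 : (c - c' + c') = c by lia.
    rewrite e1 e2 in h1.
    have h2 := hmax (c + q) ltac:(lia).
    case: (lexle_both h2 h1) => b' eb.
    move=> r hr.
    have [rc|rc] := ltnP r c; first by apply: hl; lia.
    have -> : r = c + (r - c) by lia.
    rewrite -nth_drop eb nth_cat size_drop.
    have -> : (r - c < size Z - (c + q)) = true by lia.
    rewrite nth_drop; congr nth; lia.
Qed.

Lemma cft (Z : seq nat) : ~ period Z 1 ->
  exists c, 0 < c < size Z /\ forall q, 0 < q -> lrep Z c q -> period Z q.
Proof.
move=> np.
have [sz|sz] := leqP (size Z) 0.
  by exfalso; apply: np => r; lia.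
case: (exists_max true Z sz) => c1 [h1 m1].
case: (exists_max false Z sz) => c2 [h2 m2].
have [le|le] := leqP c2 c1.
- have [c0|c0] := posnP c1.
  + exfalso; apply: np => r hr.
    have e : forall k, k < size Z -> nth 0 Z k = nth 0 Z 0.
      move=> k hk.
      have a1 := m1 k hk; have a2 := m2 k hk.
      rewrite c0 in a1; have c20 : c2 = 0 by lia.
      rewrite c20 in a2.
      case: (lexle_both a1 a2) => b' eb.
      have := congr1 (nth 0 ^~ 0) eb.
      rewrite drop0 nth_cat size_drop.
      have -> : (0 < size Z - k) = true by lia.
      by rewrite nth_drop addn0 => ->.
    by rewrite e ?(e (r + 1)); lia.
  + exists c1; split; first lia.
    exact: (crit_pos h1 m1 m2 le).
- have [c0|c0] := posnP c2; first lia.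
  exists c2; split; first lia.
  apply: (@crit_pos false Z c2 c1 h2 m2 _ (ltnW le)).
  by [].
Qed.

Lemma mu_spec (T : eqType) (w : seq T) i : 0 < mu w i /\ local_rep w i (mu w i) /\
  forall q, 0 < q -> local_rep w i q -> mu w i <= q.
Proof.
rewrite /mu; case: ex_minnP => m /andP [h1 h2] hmin; split => //; split => // q q0 hq.
by apply: hmin; rewrite /local_period_pred q0 hq.
Qed.

Lemma letterE (T : eqType) (x0 : T) (w : seq T) k : 1 <= k <= size w ->
  letter w k = Some (nth x0 w k.-1).
Proof. move=> hk; rewrite /letter onthE (nth_map x0) //; lia. Qed.

Lemma lrepE (T : eqType) (x0 : T) (w : seq T) i m : 0 < m ->
  local_rep w i m <-> (forall k, maxn 1 (i - m) <= k -> k + m <= minn (size w) (i + m - 1) ->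
     nth x0 w k.-1 = nth x0 w (k + m).-1).
Proof.
move=> m0; split.
- move/forallP => h k h1 h2.
  have hk : k < (size w).+1 by lia.
  have := implyP (h (Ordinal hk)); rewrite /= h1 h2 => /(_ erefl) /eqP.
  by rewrite !(letterE x0); try lia; case.
- move=> h; apply/forallP => [[k hk]] /=; apply/implyP => /andP [h1 h2]; apply/eqP.
  by rewrite !(letterE x0); try lia; rewrite h.
Qed.

Lemma key_inj (T : eqType) (x0 : T) (w : seq T) a b : a < size w -> b < size w ->
  index (nth x0 w a) w = index (nth x0 w b) w -> nth x0 w a = nth x0 w b.
Proof.
move=> ha hb e.
by rewrite -(nth_index x0 (mem_nth x0 ha)) e (nth_index x0 (mem_nth x0 hb)).
Qed.

Theorem lemma14 (T : eqType) (w : seq T) (i j : nat) :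
  1 <= i <= size w ->
  mu w i < i ->
  i + mu w i <= (size w).+1 ->
  1 < mu w i ->
  i < j < i + mu w i ->
  (forall j', i < j' <= j -> mu w j' < mu w i) ->
  i + mu w j <= j + mu w i /\ j + mu w j <= i + mu w i.
Proof.
move=> hi hmi hmn hm1 hj hyp.
have x0 : T.
  move: hi; case: (w) => [|x ?] /= h; [lia | exact x].

have [m0 [hrm hminm]] := mu_spec w i.
have [p0 [hrp _]] := mu_spec w j.
set m := mu w i in hmi hmn hm1 hj hyp m0 hrm hminm *.
set p := mu w j in p0 hrp *.
have pm : p < m by apply: hyp; lia.
split; first lia.
rewrite leqNgt; apply/negP => contra.
set N := size w in hi hmn.
have F1 : forall k, i - m <= k -> k + m <= i + m - 1 -> nth x0 w k.-1 = nth x0 w (k + m).-1.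
  move=> k h1 h2; apply: (proj1 (lrepE x0 _ _ m0) hrm); lia.
have F3 : forall k, 1 <= k -> j - p <= k -> k + p <= minn N (j + p - 1) ->
    nth x0 w k.-1 = nth x0 w (k + p).-1.
  move=> k h0 h1 h2; apply: (proj1 (lrepE x0 _ _ p0) hrp); lia.
set E := minn N (j + p - 1).
have hE : i + m - 1 <= E /\ E <= N by rewrite /E; lia.
set Y := map (fun a => index a w) (drop (i - 1) (take E w)).
have hsY : size Y = E - (i - 1).
  by rewrite /Y size_map size_drop size_take; case: ltnP => ?; lia.
have YE : forall r, r < size Y -> nth 0 Y r = index (nth x0 w (i + r).-1) w.
  move=> r hr; rewrite /Y (nth_map x0); last by move: hr; rewrite /Y size_map.
  rewrite nth_drop nth_take; last lia.
  congr (index (nth _ _ _) _); lia.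
have Yeq : forall r q, r + q < size Y ->
    (nth 0 Y r = nth 0 Y (r + q) <-> nth x0 w (i + r).-1 = nth x0 w (i + (r + q)).-1).
  move=> r q hr; rewrite !YE; try lia; split; last by move=> ->.
  by apply: key_inj; lia.
have stepA : forall q, 0 < q -> q < m -> ~ period Y q.
  move=> q q0 qm hp.
  have : m <= m - q; last lia.
  apply: hminm; first lia.
  apply/(lrepE x0); first lia.
  move=> k h1 h2.
  rewrite F1; try lia.
  have hh : k + (m - q) - i + q < size Y.
  clear -h1 h2 hE hsY hmi qm q0 hi. clearbody m N E Y. lia.
  have := proj1 (Yeq (k + (m - q) - i) q hh) (hp _ hh).
  have -> : i + (k + (m - q) - i) = k + (m - q) by lia.
  have -> : i + (k + (m - q) - i + q) = k + m by lia.
  by move=> ->.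
have np1 : ~ period Y 1 by apply: stepA; lia.
have [c [hc crit]] := cft np1.
have [cd|cd] := leqP (i + c) j.
- have [e0 [hre _]] := mu_spec w (i + c).
  have hem : mu w (i + c) < m by apply: hyp; lia.
  apply: (stepA (mu w (i + c))) => //.
  apply: crit => // r h1 h2 h3.
  apply/Yeq => //.
  rewrite addnA.
  apply: (proj1 (lrepE x0 _ _ e0) hre); lia.
- apply: (stepA p) => //.
  apply: crit => // r h1 h2 h3.
  apply/Yeq => //.
  rewrite addnA; apply: F3; lia.
Qed.
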